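(* Let $V$ be a non-empty finite linearly ordered set, and let $\mathscr{X}$ be a system of non-empty subsets of $V$ such that $\max X<\max V$ for every $X\in\mathscr{X}$. Then the number of subsets of $V$ of even cardinality that do not include any $X\in\mathscr{X}$ as a subset equals the number of subsets of $V$ of odd cardinality that do not include any $X\in\mathscr{X}$ as a subset. *)

(* Defs.v *)
From mathcomp Require Import all_boot all_order.
Set Implicit Arguments.
Unset Strict Implicit.
Import Order.TTheory.
Local Open Scope order_scope.

(* The maximum of a finite set X of a nonempty finite totally ordered type
   (finTBOrderType).  Meaningful when X is nonempty (default \top otherwise). *)
Definition setmax (d : Order.disp_t) (T : finTBOrderType d) (X : {set T}) : T :=
  if [pick x in X] is Some x0 then [arg max_(i > x0 in X) i] else \top.

Definition free_sets (d : Order.disp_t) (T : finTBOrderType d)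
  (Xs : {set {set T}}) (par : bool) : {set {set T}} :=
  [set A : {set T} | (odd #|A| == par) && [forall X in Xs, ~~ (X \subset A)]].
Arguments setmax {d T} X.
Arguments free_sets {d T} Xs par.

(* Main.v *)
Require Import Defs.
From mathcomp Require Import all_boot all_order.
Import Order.TTheory.
Local Open Scope order_scope.

Lemma top_notin (d : Order.disp_t) (T : finTBOrderType d) (X : {set T}) :
  setmax X < \top -> \top \notin X.
Proof.
rewrite /setmax; case: pickP => [x0 Hx0|H0].
  case: (arg_maxP (fun i : T => i) Hx0) => m _ Hm Hlt.
  apply/negP => Ht; have := Hm _ Ht.
  by move=> Hle; have := lt_le_trans Hlt Hle; rewrite ltxx.
by rewrite ltxx.
Qed.

Definition flip (d : Order.disp_t) (T : finTBOrderType d) (A : {set T}) : {set T} :=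
  if \top \in A then A :\ \top else \top |: A.
Arguments flip {d T} A.

Lemma flipK (d : Order.disp_t) (T : finTBOrderType d) : involutive (@flip d T).
Proof.
move=> A; have [Ht|Ht] := boolP (\top \in A).
  rewrite {2}/flip Ht /flip setD11 setD1K //.
rewrite {2}/flip (negbTE Ht) /flip setU11 setU1K //.
Qed.

Lemma card_flip (d : Order.disp_t) (T : finTBOrderType d) (A : {set T}) :
  odd #|flip A| = ~~ odd #|A|.
Proof.
rewrite /flip; case: ifP => Ht.
  by rewrite [in RHS](cardsD1 \top A) Ht oddD /= negbK.
by rewrite cardsU1 Ht oddD.
Qed.

Lemma sub_flip (d : Order.disp_t) (T : finTBOrderType d) (X A : {set T}) :
  \top \notin X -> (X \subset flip A) = (X \subset A).
Proof.
move=> Hn; rewrite /flip; case: ifP => Ht.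
  apply/idP/idP => H; first by apply: subset_trans H (subsetDl _ _).
  apply/subsetP => x Hx; rewrite !inE (subsetP H _ Hx) andbT.
  by apply/eqP => E; rewrite -E Hx in Hn.
apply/idP/idP => H; last by apply: subset_trans H (subsetUr _ _).
apply/subsetP => x Hx; have := subsetP H _ Hx; rewrite !inE.
by case/orP => // /eqP E; rewrite -E Hx in Hn.
Qed.

Lemma le_free (d : Order.disp_t) (T : finTBOrderType d) (Xs : {set {set T}})
  (hmax : forall X, X \in Xs -> setmax X < \top) par :
  (#|free_sets Xs par| <= #|free_sets Xs (~~ par)|)%N.
Proof.
rewrite -(card_imset _ (can_inj (@flipK d T))).
apply: subset_leq_card; apply/subsetP => B /imsetP [A HA ->].
move: HA; rewrite !inE card_flip => /andP [/eqP <- /forallP H].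
rewrite eqxx /=; apply/forallP => X; apply/implyP => HX.
rewrite sub_flip; first by have := H X; rewrite HX.
exact: top_notin (hmax X HX).
Qed.

Theorem lemma2 (d : Order.disp_t) (T : finTBOrderType d) (Xs : {set {set T}})
  (hne : forall X, X \in Xs -> X != set0)
  (hmax : forall X, X \in Xs -> setmax X < \top) :
  #|free_sets Xs false| = #|free_sets Xs true|.
Proof.
apply/eqP; rewrite eqn_leq.
by rewrite (@le_free d T Xs hmax false) (@le_free d T Xs hmax true).
Qed.
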